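(* Let $N\ge 1$, let $u,v$ be coprime non-zero integers and let $m=\max\{|u|,|v|\}$. Then the number of solutions $(a_1,a_2,b_1,b_2)\in([-N,N]\cap\mathbb{Z})^4$ to $u(b_1-b_2)=v(a_1-a_2)$ is equal to \[ \frac{4N^3}{3m^3}\left(12m^2 - 6m(|u|+|v|)+ 4|uv|\right) + O(N^2), \] where the implied constant is absolute (independent of $u,v,N$). *)

(* Defs.v *)
From mathcomp Require Import all_boot all_order all_algebra.
Set Implicit Arguments. Unset Strict Implicit. Unset Printing Implicit Defensive.
Import Order.TTheory GRing.Theory Num.Theory.
Local Open Scope ring_scope.

Definition int_range (N : nat) : seq int :=
  [seq (i%:Z - N%:Z) | i <- iota 0 (2 * N).+1].

Definition num_solutions (N : nat) (u v : int) : nat := (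
  \sum_(a1 <- int_range N) \sum_(a2 <- int_range N)
     \sum_(b1 <- int_range N) \sum_(b2 <- int_range N)
       nat_of_bool ((u * (b1 - b2))%R == (v * (a1 - a2))%R :> int))%N.

Definition main_term (N : nat) (u v : int) : rat :=
  let m : rat := (Num.max `|u| `|v|)%:~R in
  (4 * N%:R ^+ 3) / (3 * m ^+ 3) *
    (12 * m ^+ 2 - 6 * m * ((`|u| + `|v|)%:~R) + 4 * (`|u * v|)%:~R).

(* Main.v *)
Require Import Defs.
From mathcomp Require Import all_boot all_order all_algebra.
From mathcomp Require Import zify ring lra.
Import Order.TTheory GRing.Theory Num.Theory.
Local Open Scope ring_scope.

Lemma sumb_count (T : Type) (r : seq T) (P : pred T) :
  (\sum_(i <- r) nat_of_bool (P i))%N = count P r.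
Proof. by elim: r => [|x r IH]; rewrite ?big_nil ?big_cons //= IH. Qed.

Lemma mem_int_range N x :
  (x \in int_range N) = ((- (N%:Z) <= x) && (x <= N%:Z)).
Proof.
apply/mapP/andP => [[i]|[h1 h2]].
  rewrite mem_iota => /andP[_ hi] ->; split; lia.
exists (absz (x + N%:Z)); last by lia.
rewrite mem_iota; apply/andP; split; lia.
Qed.

Lemma uniq_int_range N : uniq (int_range N).
Proof.
rewrite map_inj_uniq ?iota_uniq // => i j /= h; lia.
Qed.

Lemma count_leq_iota n K : count (leq n) (iota 0 K) = (K - n)%N.
Proof.
elim: K => [|K IH] //.
rewrite -addn1 iotaD count_cat IH /= add0n addn0.
case: (leqP n K) => h /=; lia.
Qed.

Definition cnt (N : nat) (k : int) : nat := (\sum_(a1 <- int_range N) \sum_(a2 <- int_range N) nat_of_bool ((a1 - a2)%R == k))%N.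

Lemma cnt_nat N n : cnt N n%:Z = ((2*N).+1 - n)%N.
Proof.
rewrite /cnt.
transitivity (\sum_(a1 <- int_range N) nat_of_bool ((a1 - n%:Z)%R \in int_range N))%N.
  apply: eq_bigr => a1 _.
  rewrite (eq_bigr (fun a2 => nat_of_bool (pred1 (a1 - n%:Z) a2))); last first.
    by move=> a2 _ /=; congr nat_of_bool; apply/eqP/eqP; lia.
  by rewrite sumb_count (count_uniq_mem _ (uniq_int_range N)).
rewrite sumb_count count_map -count_leq_iota.
apply: eq_in_count => i; rewrite mem_iota => /andP[_ hi] /=; rewrite mem_int_range.
apply/andP/idP; lia.
Qed.

Lemma cnt_opp N k : cnt N (- k) = cnt N k.
Proof.
rewrite /cnt exchange_big; apply: eq_bigr => a1 _; apply: eq_bigr => a2 _.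
by congr nat_of_bool; apply/eqP/eqP; lia.
Qed.

Lemma cnt_abs N k : cnt N k = ((2*N).+1 - absz k)%N.
Proof.
case: k => n; first by rewrite cnt_nat.
by rewrite NegzE cnt_opp cnt_nat.
Qed.

Definition RR (L : nat) : seq int :=
  [seq (j%:Z) | j <- iota 0 L.+1] ++ [seq (- (j.+1)%:Z)%R | j <- iota 0 L].

Lemma uniq_RR L : uniq (RR L).
Proof.
rewrite cat_uniq !map_inj_uniq ?iota_uniq ?andbT //=; last by move=> i j /=; lia.
  apply/hasPn => x /mapP[j _ ->]; apply/mapP => -[i _ /eqP]; lia.
by move=> i j /=; lia.
Qed.

Lemma mem_RR L t : (absz t <= L)%N -> t \in RR L.
Proof.
case: t => n /= h; rewrite mem_cat; apply/orP.
  by left; apply/mapP; exists n => //; rewrite mem_iota; lia.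
by right; apply/mapP; exists n; [rewrite mem_iota; lia | rewrite NegzE].
Qed.

Lemma key L (u v d e : int) : u != 0 -> coprimez u v -> (absz d <= L)%N ->
  nat_of_bool (u * e == v * d) =
  (\sum_(t <- RR L) (nat_of_bool (d == u * t)%R * nat_of_bool (e == v * t)%R))%N.
Proof.
move=> u0 cuv hd.
case: eqP => [he|hne].
  have : (u %| d)%Z.
    rewrite -(Gauss_dvdzr d cuv); apply/dvdzP; exists e; by rewrite -he mulrC.
  case/dvdzP => t0 ed.
  have ee : e = v * t0.
    apply: (mulfI u0); rewrite he ed; ring.
  rewrite (eq_bigr (fun t => nat_of_bool (pred1 t0 t))); last first.
    move=> t _ /=; rewrite ed ee.
    case: (eqVneq t t0) => [->|ht]; first by rewrite [t0 * u]mulrC !eqxx.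
    have -> : (t0 * u == u * t) = false.
      apply/negbTE; apply: contra ht => /eqP h; apply/eqP.
      by apply: (mulfI u0); rewrite -h mulrC.
    by [].
  rewrite sumb_count (count_uniq_mem _ (uniq_RR L)) mem_RR //.
  apply: leq_trans hd; rewrite ed abszM.
  have : (0 < absz u)%N by rewrite absz_gt0.
  by move=> h; apply: leq_pmulr.
rewrite big1 // => t _.
case: (eqVneq d (u * t)) => [hd'|]; last by rewrite mul0n.
case: (eqVneq e (v * t)) => [he'|]; last by rewrite muln0.
by exfalso; apply: hne; rewrite he' hd'; ring.
Qed.

Lemma exch2 (I J K : Type) (r1 : seq I) (r2 : seq J) (r3 : seq K) (F : I -> J -> K -> nat) :
  (\sum_(i <- r1) \sum_(j <- r2) \sum_(k <- r3) F i j k =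
   \sum_(k <- r3) \sum_(i <- r1) \sum_(j <- r2) F i j k)%N.
Proof.
under eq_bigr => i _ do rewrite exchange_big.
by rewrite exchange_big.
Qed.

Lemma num_sol_eq N u v : u != 0 -> coprimez u v ->
  num_solutions N u v = (\sum_(t <- RR (2*N)) cnt N (u*t)%R * cnt N (v*t)%R)%N.
Proof.
move=> u0 cuv; rewrite /num_solutions.
transitivity (\sum_(a1 <- int_range N) \sum_(a2 <- int_range N)
   \sum_(b1 <- int_range N) \sum_(b2 <- int_range N) \sum_(t <- RR (2*N))
    (nat_of_bool ((a1-a2)%R == (u*t)%R) * nat_of_bool ((b1 - b2)%R == (v*t)%R)))%N.
  rewrite big_seq [RHS]big_seq; apply: eq_bigr => a1 ha1.
  rewrite big_seq [RHS]big_seq; apply: eq_bigr => a2 ha2.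
  apply: eq_bigr => b1 _; apply: eq_bigr => b2 _.
  apply: key => //; move: ha1 ha2; rewrite !mem_int_range; lia.
rewrite (eq_bigr (fun a1 => \sum_(a2 <- int_range N) \sum_(t <- RR (2*N))
    nat_of_bool ((a1 - a2)%R == (u*t)%R) * cnt N (v * t)%R))%N; last first.
  move=> a1 _; apply: eq_bigr => a2 _; rewrite exch2; apply: eq_bigr => t _.
  rewrite /cnt big_distrr /=; apply: eq_bigr => b1 _; by rewrite big_distrr.
rewrite exch2; apply: eq_bigr => t _; rewrite /cnt big_distrl /=.
by apply: eq_bigr => a1 _; rewrite big_distrl.
Qed.

Definition hN (K a b j : nat) : nat := ((K - a*j) * (K - b*j))%N.

Lemma S_eq N u v :
  (\sum_(t <- RR (2*N)) cnt N (u*t)%R * cnt N (v*t)%R)%N =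
  (\sum_(j <- iota 0 (2*N).+1) hN (2*N).+1 (absz u) (absz v) j +
   \sum_(j <- iota 0 (2*N)) hN (2*N).+1 (absz u) (absz v) j.+1)%N.
Proof.
rewrite big_cat !big_map; congr addn; apply: eq_bigr => j _;
  by rewrite !cnt_abs !abszM /hN ?abszN.
Qed.

Lemma S_split K a b (n : nat) :
  (\sum_(j <- iota 0 n.+1) hN K a b j = hN K a b 0 + \sum_(j <- iota 0 n) hN K a b j.+1)%N.
Proof.
rewrite /= big_cons (iotaDl 1 0) big_map.
by apply: congr1; apply: eq_bigr => j _; rewrite add1n.
Qed.

Lemma sum_trunc L a b : (0 < b)%N ->
  (\sum_(j <- iota 0 L.+1) hN L.+1 a b j = \sum_(j <- iota 0 (L %/ b).+1) hN L.+1 a b j)%N.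
Proof.
move=> b0.
have hT : (L %/ b <= L)%N by apply: leq_div.
have hc := ltn_ceil L b0.
have -> : iota 0 L.+1 = iota 0 (L %/ b).+1 ++ iota (L %/ b).+1 (L - L %/ b).
  by rewrite -iotaD; congr iota; lia.
rewrite big_cat [X in (_ + X)%N = _]big1_seq ?addn0 //.
move=> j; rewrite mem_iota => /and3P[_ h1 _]; rewrite /hN.
suff -> : (L.+1 - b * j = 0)%N by rewrite muln0.
have : ((L %/ b).+1 * b <= j * b)%N by exact: leq_mul h1 (leqnn b).
lia.
Qed.

Definition Qf {R : realFieldType} (a b K T : R) :=
  K^+2 * (T+1) - K * (a+b) * T * (T+1) / 2 + a * b * T * (T+1) * (2*T+1) / 6.
Definition Mainf {R : realFieldType} (a b M X : R) :=
  2 * (M^+2 * X - M * (a+b) * X^+2 / 2 + a*b*X^+3/3).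

Lemma closed_form (R : realFieldType) (K a b : R) (T : nat) :
  \sum_(j <- iota 0 T.+1) (K - a * j%:R) * (K - b * j%:R) = Qf a b K T%:R.
Proof.
elim: T => [|T IH].
  by rewrite /= big_seq1 /Qf; field.
have -> : iota 0 T.+2 = iota 0 T.+1 ++ [:: T.+1] by rewrite -addn1 iotaD.
have eT : T.+1%:R = T%:R + 1 :> R by rewrite -natr1.
by rewrite big_cat IH big_seq1 eT /Qf /=; field.
Qed.

Lemma sum_rat K a b T : (b * T < K)%N -> (a <= b)%N ->
  ((\sum_(j <- iota 0 T.+1) hN K a b j)%N%:R : rat) =
  \sum_(j <- iota 0 T.+1) (K%:R - a%:R * j%:R) * (K%:R - b%:R * j%:R).
Proof.
move=> hK hab; rewrite natr_sum; apply: eq_big_seq => j; rewrite mem_iota => /andP[_ hj].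
have hbj : (b * j < K)%N.
  apply: leq_ltn_trans hK; rewrite leq_mul2l; apply/orP; right; lia.
have haj : (a * j <= b * j)%N by rewrite leq_mul2r hab orbT.
rewrite /hN natrM !natrB ?natrM //; lia.
Qed.

Lemma analytic (R : realFieldType) (a b M X T : R) :
  1 <= a -> a <= b -> 1 <= M -> b * X = M -> 0 <= T -> T <= X -> X - T <= 1 ->
  T <= T * T ->
  `|2 * Qf a b (M+1) T - (M+1)^+2 - Mainf a b M X| <= 60 * M^+2.
Proof.
move=> ha hab hM hX hT hTX hD hTT.
set K := M + 1.
set D := X - T.
have eT : T = X - D by rewrite /D; ring.
have hD0 : 0 <= D by rewrite /D; lra.
have hDX : D <= X by rewrite /D; lra.
have hb : 1 <= b by lra.
have hX0 : 0 <= X by nra.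
have hXM : X <= M by nra.
have E : 2 * Qf a b K T - K^+2 - Mainf a b M X = 2 * (K^+2/2 + (2*M+1)*X - K^+2 * D - (a+b)/2 * (X^+2 - 2*K*X*D + K*D^+2 + K*T) - a*b*(X^+2*D - X*D^+2 + D^+3/3) + a*b*(3*T^+2+T)/6).
  by rewrite /Qf /Mainf /K eT; field.
rewrite E.
have b1 : K^+2 <= 4 * M^+2 by rewrite /K; nra.
have b2 : (2*M+1)*X <= 3 * M^+2 by nra.
have b3 : K^+2 * D <= 4 * M^+2 by rewrite /K; nra.
have b4 : (a+b)*X^+2 <= 2 * M^+2 by nra.
have hK : K <= 2 * M by rewrite /K; lra.
have hK0 : 0 <= K by rewrite /K; lra.
have hbD : b * D <= M by nra.
have hbT : b * T <= M by nra.
have b5 : (a+b)*K*X*D <= 4 * M^+2.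
  have h1 : (a+b)*X <= 2 * M by nra.
  have h2 : K * D <= 2 * M by nra.
  have p : 0 <= (a+b)*X by nra.
  have q : 0 <= K * D by nra.
  have := ler_pM p q h1 h2. nra.
have b6 : (a+b)*K*D^+2 <= 4 * M^+2.
  have h1 : (a+b)*D^+2 <= 2 * M by nra.
  have p : 0 <= (a+b)*D^+2 by nra.
  have := ler_pM p hK0 h1 hK. nra.
have b7 : (a+b)*K*T <= 4 * M^+2.
  have h1 : (a+b)*T <= 2 * M by nra.
  have p : 0 <= (a+b)*T by nra.
  have := ler_pM p hK0 h1 hK. nra.
have ha0 : 0 <= a by lra.
have hb0 : 0 <= b by lra.
have hab0 : a * b <= b * b by nra.
have hab1 : 0 <= a * b by nra.
have eM2 : M^+2 = b*b*(X*X) by rewrite -hX; ring.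
have lXX : forall Y Z, 0 <= Y -> 0 <= Z -> Y <= X -> Z <= X -> a*b*(Y*Z) <= M^+2.
  move=> Y Z hY hZ hYX hZX; rewrite eM2.
  have hYZ : Y * Z <= X * X by apply: ler_pM.
  apply: ler_pM => //; nra.
have b8 : a*b*X^+2*D <= M^+2.
  have h1 : a*b*X^+2 <= M^+2 by have := lXX X X; rewrite expr2; nra.
  have p : 0 <= a*b*X^+2 by rewrite ?mulr_ge0 ?exprn_ge0.
  have := ler_pM p hD0 h1 hD. nra.
have b9 : a*b*X*D^+2 <= M^+2.
  have h1 : a*b*X*D <= M^+2 by have := lXX X D; nra.
  have p : 0 <= a*b*X*D by rewrite ?mulr_ge0 ?exprn_ge0.
  have := ler_pM p hD0 h1 hD. nra.
have b10 : a*b*D^+3 <= M^+2.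
  have h1 : a*b*D^+2 <= M^+2 by have := lXX D D; rewrite expr2; nra.
  have p : 0 <= a*b*D^+2 by rewrite ?mulr_ge0 ?exprn_ge0.
  have := ler_pM p hD0 h1 hD. nra.
have b11 : a*b*T^+2 <= M^+2 by have := lXX T T; rewrite expr2; nra.
have b12 : a*b*T <= M^+2 by nra.
have hapb : 0 <= a + b by lra.
have h2M : 0 <= 2*M+1 by lra.
have n0 : 0 <= (2*M+1)*X by rewrite ?mulr_ge0 ?exprn_ge0.
have n1 : 0 <= K^+2*D by rewrite ?mulr_ge0 ?exprn_ge0.
have n2 : 0 <= (a+b)*X^+2 by rewrite ?mulr_ge0 ?exprn_ge0.
have n3 : 0 <= (a+b)*K*X*D by rewrite ?mulr_ge0 ?exprn_ge0.
have n4 : 0 <= (a+b)*K*D^+2 by rewrite ?mulr_ge0 ?exprn_ge0.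
have n5 : 0 <= (a+b)*K*T by rewrite ?mulr_ge0 ?exprn_ge0.
have n6 : 0 <= a*b*X^+2*D by rewrite ?mulr_ge0 ?exprn_ge0.
have n7 : 0 <= a*b*X*D^+2 by rewrite ?mulr_ge0 ?exprn_ge0.
have n8 : 0 <= a*b*D^+3 by rewrite ?mulr_ge0 ?exprn_ge0.
have n9 : 0 <= a*b*T^+2 by rewrite ?mulr_ge0 ?exprn_ge0.
have n10 : 0 <= a*b*T by rewrite ?mulr_ge0 ?exprn_ge0.
have n11 : 0 <= K^+2 by rewrite ?mulr_ge0 ?exprn_ge0.
clearbody K D; clear E eT.
rewrite ler_norml; apply/andP; split; lra.
Qed.


Lemma main_eq N u v : v != 0 -> (absz u <= absz v)%N ->
  main_term N u v = Mainf (absz u)%:R (absz v)%:R (2*N)%:R ((2*N)%:R / (absz v)%:R).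
Proof.
move=> v0 huv.
have hb : (absz v)%:R != 0 :> rat by rewrite pnatr_eq0 absz_eq0.
rewrite /main_term; cbv zeta.
have -> : Num.max `|u| `|v| = `|v|.
  by apply/max_idPr; rewrite -!abszE lez_nat.
rewrite /Mainf normrM -!abszE.
have -> : (((absz v)%:Z)%:~R : rat) = (absz v)%:R by [].
have -> : ((((absz u)%:Z + (absz v)%:Z)%R)%:~R : rat) = (absz u)%:R + (absz v)%:R.
  by rewrite intrD.
have -> : ((((absz u)%:Z * (absz v)%:Z)%R)%:~R : rat) = (absz u)%:R * (absz v)%:R.
  by rewrite intrM.
rewrite natrM; field; by [].
Qed.

Lemma main_le N u v : (1 <= N)%N -> u != 0 -> v != 0 -> coprimez u v ->
  (absz u <= absz v)%N ->
  `|(num_solutions N u v)%:R - main_term N u v| <= 60 * ((2*N)%:R)^+2 :> rat.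
Proof.
move=> N1 u0 v0 cuv huv.
rewrite (main_eq N u v v0 huv).
set a := absz u; set b := absz v; set L := (2*N)%N.
have b0 : (0 < b)%N by rewrite absz_gt0.
have a0 : (0 < a)%N by rewrite absz_gt0.
set T := (L %/ b)%N.
set Sg := (\sum_(j <- iota 0 L.+1) hN L.+1 a b j)%N.
have eS : ((num_solutions N u v)%:R : rat) = 2 * Sg%:R - (L.+1)%:R ^+ 2.
  have h0 : forall K x y, hN K x y 0 = (K * K)%N by move=> *; rewrite /hN !muln0 subn0.
  rewrite num_sol_eq // S_eq /Sg S_split h0 -/L.
  set P := (\sum_(_ <- _) _)%N.
  rewrite !natrD natrM expr2; ring.
have hbT : (b * T <= L)%N by rewrite mulnC leq_divM.
have hc : (L < T.+1 * b)%N by apply: ltn_ceil.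
have eSg : (Sg%:R : rat) = Qf a%:R b%:R L.+1%:R T%:R.
  by rewrite /Sg sum_trunc // sum_rat ?closed_form //; lia.
have eK : (L.+1%:R : rat) = L%:R + 1 by rewrite -natr1.
rewrite eS eSg eK.
have hb : 0 < (b%:R : rat) by rewrite ltr0n.
apply: analytic.
- by rewrite ler1n.
- by rewrite ler_nat.
- rewrite ler1n; lia.
- by field; rewrite gt_eqF.
- by rewrite ler0n.
- by rewrite ler_pdivlMr // -natrM ler_nat mulnC.
- rewrite lerBlDl ler_pdivrMr // natr1 -natrM ler_nat; lia.
- by rewrite -natrM ler_nat; case: (T) => // n; rewrite leq_pmulr.
Qed.

Lemma num_sym N u v : u != 0 -> v != 0 -> coprimez u v ->
  num_solutions N u v = num_solutions N v u.
Proof.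
move=> u0 v0 cuv; have cvu : coprimez v u by rewrite coprimez_sym.
rewrite (num_sol_eq N u v u0 cuv) (num_sol_eq N v u v0 cvu).
by apply: eq_bigr => t _; rewrite mulnC.
Qed.

Lemma main_sym N u v : main_term N u v = main_term N v u.
Proof. by rewrite /main_term maxC [`|u| + _]addrC [u * v]mulrC. Qed.

Theorem lemma2p2 :
  exists C : rat, forall (N : nat) (u v : int),
    (1 <= N)%N -> u != 0 -> v != 0 -> coprimez u v ->
    `| (num_solutions N u v)%:R - main_term N u v | <= C * N%:R ^+ 2.
Proof.
exists 240 => N u v N1 u0 v0 cuv.
have -> : 240 * N%:R ^+ 2 = 60 * ((2*N)%:R)^+2 :> rat by rewrite natrM; ring.
case: (leqP (absz u) (absz v)) => h; first exact: main_le.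
have cvu : coprimez v u by rewrite coprimez_sym.
rewrite (num_sym N u v u0 v0 cuv) (main_sym N u v).
exact: (main_le N v u N1 v0 u0 cvu (ltnW h)).
Qed.
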